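(* For any geodetic simple connected graph $G$ with at least one edge, $src(G)=\chi'(G)$. Moreover, an edge coloring $f$ of $G$ strongly rainbow connects $G$ if and only if $f$ is a proper coloring of the vertices of $H(G)$.
   Context: A graph is geodetic if every pair of distinct vertices is joined by a unique shortest path. An edge coloring of $G$ is any function $f:E(G)\to\{1,\dots,k\}$, $k\in\mathbb{N}$ (adjacent edges may share a color). A path is rainbow with respect to $f$ if its edges receive pairwise distinct colors. $f$ strongly rainbow connects $G$ if for every pair of distinct vertices $u,v$ there is a shortest $(u,v)$-path that is rainbow; $src(G)$ is the minimum $k$ for which such an $f$ exists. For distinct $u_1,u_2\in V(G)$, an edge $e$ separates $u_1,u_2$ if $e$ lies on every shortest $(u_1,u_2)$-path. The auxiliary graph $H(G)$ has vertex set $E(G)$, and distinct $e_1,e_2$ are adjacent in $H(G)$ iff some pair of distinct vertices of $G$ is separated by both $e_1$ and $e_2$. $\chi'(G)=\chi(H(G))$. An edge coloring of $G$ is regarded as a coloring of the vertices of $H(G)$ since $V(H(G))=E(G)$. *)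

(* Defs.v *)
From mathcomp Require Import all_boot.
From mathcomp Require Import boolp.
Set Implicit Arguments. Unset Strict Implicit. Unset Printing Implicit Defensive.

Section Graph.
Variable T : finType.
Variable g : rel T.

Definition simple_graph := symmetric g /\ irreflexive g.
Definition connected_graph := forall x y : T, connect g x y.

Definition edges : {set {set T}} :=
  [set [set x; y] | x in T, y in T & g x y].

(* a walk from x to y: the vertex sequence x :: p; its length is size p *)
Definition is_walk (x y : T) (p : seq T) : bool := path g x p && (last x p == y).

Definition shortest (x y : T) (p : seq T) : Prop :=
  is_walk x y p /\ forall q, is_walk x y q -> size p <= size q.

Definition geodetic : Prop :=
  forall u v : T, u != v -> exists! p, shortest u v p.

Definition path_edges (x : T) (p : seq T) : seq {set T} :=
  pairmap (fun a b => [set a; b]) x p.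

Definition rainbow (f : {set T} -> nat) (x : T) (p : seq T) : bool :=
  uniq (map f (path_edges x p)).

Definition strongly_rainbow_connects (f : {set T} -> nat) : Prop :=
  forall u v : T, u != v -> exists p, shortest u v p /\ rainbow f u p.

Definition edge_coloring (k : nat) (f : {set T} -> nat) : Prop :=
  forall e, e \in edges -> 0 < f e <= k.

Definition src_colorable (k : nat) : Prop :=
  exists f, edge_coloring k f /\ strongly_rainbow_connects f.

Definition separates (e : {set T}) (u1 u2 : T) : Prop :=
  forall p, shortest u1 u2 p -> e \in path_edges u1 p.

(* adjacency in the auxiliary graph H(G), whose vertex set is edges *)
Definition H_adj (e1 e2 : {set T}) : Prop :=
  e1 \in edges /\ e2 \in edges /\ e1 != e2 /\
  exists u1 u2 : T, u1 != u2 /\ separates e1 u1 u2 /\ separates e2 u1 u2.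

Definition proper_H (f : {set T} -> nat) : Prop :=
  forall e1 e2, H_adj e1 e2 -> f e1 != f e2.

Definition H_colorable (k : nat) : Prop :=
  exists f, edge_coloring k f /\ proper_H f.

(* minimum k with property P (0 if none exists) *)
Definition min_nat (P : nat -> Prop) : nat :=
  match pselect (exists k, `[< P k >]) with
  | left H => ex_minn H
  | right _ => 0
  end.

Definition src : nat := min_nat src_colorable.
Definition chi_H : nat := min_nat H_colorable.   (* chi'(G) = chi(H(G)) *)

End Graph.

(* Main.v *)
Require Import Defs.
From mathcomp Require Import all_boot.
From mathcomp Require Import boolp.
Set Implicit Arguments. Unset Strict Implicit. Unset Printing Implicit Defensive.

Section Aux.
Variable T : finType.
Variable g : rel T.

Lemma size_shorten (x : T) (p : seq T) : size (shorten x p) <= size p.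
Proof.
elim: p x => [|y p IH] x //=.
case: ifP => _ /=; last by rewrite ltnS IH.
by apply: leq_trans (IH x) _.
Qed.

Lemma pe_sub (y : T) p e : e \in path_edges y p -> forall z, z \in e -> z \in y :: p.
Proof.
elim: p y => [|a p IH] y //=.
rewrite inE => /orP [/eqP -> | He] z.
  by rewrite !inE => /orP [->|->] //; rewrite orbT.
by move=> /(IH _ He) Hz; rewrite inE Hz orbT.
Qed.

Lemma uniq_pe (x : T) p : uniq (x :: p) -> uniq (path_edges x p).
Proof.
elim: p x => [|y p IH] x //= /andP [Hx Hu].
rewrite IH // andbT; apply/negP => /pe_sub /(_ x).
rewrite !inE eqxx => /(_ isT) H.
by rewrite inE H in Hx.
Qed.

Lemma pe_edges (x : T) p e : path g x p -> e \in path_edges x p -> e \in edges g.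
Proof.
elim: p x => [|y p IH] x //= /andP [Hxy Hp]; rewrite inE => /orP [/eqP -> | He].
  by apply/imset2P; econstructor; [ | | reflexivity]; rewrite ?inE.
exact: IH He.
Qed.

Lemma uniq_map_neq (f : {set T} -> nat) s a b :
  uniq (map f s) -> a \in s -> b \in s -> a != b -> f a != f b.
Proof.
elim: s => [|c s IH] //= /andP [Hc Hu]; rewrite !inE.
move=> /orP [/eqP -> | Ha] /orP [/eqP -> | Hb]; rewrite ?eqxx //.
- move=> _; apply/eqP => E; move: Hc; rewrite E map_f //.
- move=> _; apply/eqP => E; move: Hc; rewrite -E map_f //.
- exact: IH.
Qed.

Hypothesis geo : geodetic g.

Lemma shortest_uniq u v p : u != v -> shortest g u v p -> uniq (u :: p).
Proof.
move=> uv [Hw Hmin].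
have [p0 [_ Hun]] := geo uv.
move: Hw; rewrite /is_walk => /andP [Hp /eqP Hl].
have Hs : shortest g u v p by split => //; rewrite /is_walk Hp /=; apply/eqP.
have Hsz := size_shorten u p.
case: (shortenP Hp) Hl Hsz => p' Hp' Hu' _ Hl Hsz.
have Hs' : shortest g u v p'.
  split; first by rewrite /is_walk Hp' /=; apply/eqP.
  move=> q Hq; apply: leq_trans (Hmin q Hq).
  exact: Hsz.
by rewrite -(Hun _ Hs) (Hun _ Hs').
Qed.

End Aux.

Theorem theorem2 (T : finType) (g : rel T) :
  simple_graph g -> connected_graph g -> geodetic g ->
  (exists x y : T, g x y) ->
  src g = chi_H g /\
  (forall f : {set T} -> nat,
     strongly_rainbow_connects g f <-> proper_H g f).
Proof.
move=> _ _ geo _.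
have equiv : forall f : {set T} -> nat,
     strongly_rainbow_connects g f <-> proper_H g f.
  move=> f; split.
    move=> Hf e1 e2 [_ [_ [ne [u1 [u2 [uu [s1 s2]]]]]]].
    have [q [Hq Hr]] := Hf _ _ uu.
    exact: uniq_map_neq Hr (s1 _ Hq) (s2 _ Hq) ne.
  move=> Hf u v uv.
  have [p [Hp Hun]] := geo _ _ uv.
  exists p; split => //.
  have Hu := shortest_uniq geo uv Hp.
  rewrite /rainbow map_inj_in_uniq; first exact: uniq_pe.
  move=> e1 e2 H1 H2 E; apply/eqP; apply/negPn/negP => ne.
  have sep : forall e, e \in path_edges u p -> separates g e u v.
    by move=> e He q Hq; rewrite -(Hun _ Hq).
  have Hpath : path g u p by case: Hp => /andP [].
  suff: H_adj g e1 e2 by move/Hf; rewrite E eqxx.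
  split; first exact: pe_edges Hpath H1.
  split; first exact: pe_edges Hpath H2.
  split => //; exists u, v; split => //; split; exact: sep.
split => //.
have E : src_colorable g = H_colorable g.
  apply: funext => k; apply: propext; split => -[f [c h]]; exists f; split => //;
  by apply/equiv.
by rewrite /src /chi_H E.
Qed.
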